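(* The following quantifier-free set theories are all non-convex: $\mathsf{MLSS}$ ($\mathsf{MLS}$ extended with literals $x=\{y\}$), $\mathsf{MLSP}$ ($\mathsf{MLS}$ extended with literals $x=\mathcal{P}(y)$), $\mathsf{MLSSP}$ ($\mathsf{MLS}$ extended with both), $\mathsf{MLSU}$ ($\mathsf{MLS}$ extended with literals $x=\bigcup y$), $\mathsf{MLS}\times$ ($\mathsf{MLS}$ extended with the Cartesian product $y\times z$), $\mathsf{MLS}\otimes$ ($\mathsf{MLS}$ extended with the unordered Cartesian product $y\otimes z$), $\mathsf{BST}\times$ and $\mathsf{BST}\otimes$ (Boolean set theory $\mathsf{BST}$ extended with the Cartesian product, respectively the unordered Cartesian product).
   Context: $\mathsf{MLS}$ is the quantifier-free propositional closure of atoms $x=\varnothing$, $x=y$, $x\subseteq y$, $x\in y$, $x=y\setminus z$, $x=y\cup z$, $x=y\cap z$ over set variables. $\mathsf{BST}$ consists of conjunctions of literals of the forms $s=\varnothing$, $s\neq\varnothing$, $s\cap t=\varnothing$, $s\cap t\neq\varnothing$, $s\subseteq t$, $s\not\subseteq t$, $s=t$, $s\neq t$, where $s,t$ are terms built from set variables with $\cup,\cap,\setminus$ (no membership). Formulae are interpreted by set assignments (maps from finitely many set variables into the von Neumann universe) with the usual meanings; $\mathcal{P}$ is powerset, $\bigcup y$ is the union of the members of $y$, $\times$ is the Cartesian product of ordered pairs, and $y\otimes z=\{\{a,b\}\mid a\in y,\ b\in z\}$. A theory is convex if for every conjunction of its literals $\psi$ and every finite nonempty disjunction $\bigvee_i x_i=y_i$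 of equalities, whenever every set assignment satisfying $\psi$ satisfies the disjunction, some single disjunct $x_i=y_i$ is satisfied by every set assignment satisfying $\psi$. *)

(* Defs.v *)
(* A model of the set-theoretic universe: Aczel's
   well-founded trees ("sets as trees"), with extensional equality eqV and
   membership memV. *)
From Stdlib Require Import List.
Import ListNotations.

Inductive V : Type := sup (A : Type) (f : A -> V).

Definition idx (x : V) : Type := match x with sup A _ => A end.
Definition elt (x : V) : idx x -> V := match x with sup _ f => f end.

Fixpoint eqV (x y : V) {struct x} : Prop :=
  match x, y with
  | sup A f, sup B g =>
      (forall a, exists b, eqV (f a) (g b)) /\ (forall b, exists a, eqV (f a) (g b))
  end.

Definition memV (x y : V) : Prop := exists b : idx y, eqV x (elt y b).

Definition subV (x y : V) : Prop := forall z, memV z x -> memV z y.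

Definition emptyV : V := sup False (fun e => match e with end).
Definition singV (y : V) : V := sup unit (fun _ => y).
Definition upairV (a b : V) : V := sup bool (fun t => if t then a else b).
Definition opairV (a b : V) : V := upairV (singV a) (upairV a b).
Definition unionV (y z : V) : V :=
  sup (idx y + idx z) (fun s => match s with inl a => elt y a | inr b => elt z b end).
Definition interV (y z : V) : V :=
  sup {a : idx y | memV (elt y a) z} (fun s => elt y (proj1_sig s)).
Definition diffV (y z : V) : V :=
  sup {a : idx y | ~ memV (elt y a) z} (fun s => elt y (proj1_sig s)).
Definition powV (y : V) : V :=
  sup (idx y -> Prop) (fun P => sup {a : idx y | P a} (fun s => elt y (proj1_sig s))).
Definition bigunionV (y : V) : V :=
  sup {a : idx y & idx (elt y a)} (fun s => elt (elt y (projT1 s)) (projT2 s)).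
Definition prodV (y z : V) : V :=
  sup (idx y * idx z) (fun p => opairV (elt y (fst p)) (elt z (snd p))).
Definition uprodV (y z : V) : V :=
  sup (idx y * idx z) (fun p => upairV (elt y (fst p)) (elt z (snd p))).

Definition assignment := nat -> V.

Inductive atom : Type :=
| AEmpty  (x : nat)
| AEq     (x y : nat)
| ASub    (x y : nat)
| AMem    (x y : nat)
| ADiff   (x y z : nat)
| AUnion  (x y z : nat)
| AInter  (x y z : nat)
| ASingle (x y : nat)
| APow    (x y : nat)
| ABigU   (x y : nat)
| AProd   (x y z : nat)
| AUProd  (x y z : nat).

Definition sat_atom (s : assignment) (a : atom) : Prop :=
  match a with
  | AEmpty x => eqV (s x) emptyV
  | AEq x y => eqV (s x) (s y)
  | ASub x y => subV (s x) (s y)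
  | AMem x y => memV (s x) (s y)
  | ADiff x y z => eqV (s x) (diffV (s y) (s z))
  | AUnion x y z => eqV (s x) (unionV (s y) (s z))
  | AInter x y z => eqV (s x) (interV (s y) (s z))
  | ASingle x y => eqV (s x) (singV (s y))
  | APow x y => eqV (s x) (powV (s y))
  | ABigU x y => eqV (s x) (bigunionV (s y))
  | AProd x y z => eqV (s x) (prodV (s y) (s z))
  | AUProd x y z => eqV (s x) (uprodV (s y) (s z))
  end.

Record mls_ext : Type := { e_single : bool; e_pow : bool; e_bigu : bool;
                           e_prod : bool; e_uprod : bool }.

Definition atom_ok (E : mls_ext) (a : atom) : bool :=
  match a with
  | ASingle _ _ => e_single E
  | APow _ _ => e_pow E
  | ABigU _ _ => e_bigu E
  | AProd _ _ _ => e_prod E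
  | AUProd _ _ _ => e_uprod E
  | _ => true
  end.

Definition mlit := (bool * atom)%type.
Definition sat_mlit (s : assignment) (l : mlit) : Prop :=
  if fst l then sat_atom s (snd l) else ~ sat_atom s (snd l).

Inductive bterm : Type :=
| TVar (x : nat)
| TUnion (s t : bterm)
| TInter (s t : bterm)
| TDiff (s t : bterm)
| TProd (s t : bterm)
| TUProd (s t : bterm).

Fixpoint eval (s : assignment) (t : bterm) : V :=
  match t with
  | TVar x => s x
  | TUnion a b => unionV (eval s a) (eval s b)
  | TInter a b => interV (eval s a) (eval s b)
  | TDiff a b => diffV (eval s a) (eval s b)
  | TProd a b => prodV (eval s a) (eval s b)
  | TUProd a b => uprodV (eval s a) (eval s b)
  end.

Fixpoint bterm_ok (prod uprod : bool) (t : bterm) : bool :=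
  match t with
  | TVar _ => true
  | TUnion a b | TInter a b | TDiff a b => bterm_ok prod uprod a && bterm_ok prod uprod b
  | TProd a b => prod && bterm_ok prod uprod a && bterm_ok prod uprod b
  | TUProd a b => uprod && bterm_ok prod uprod a && bterm_ok prod uprod b
  end.

Inductive batom : Type :=
| BEmpty (s : bterm)
| BDisj  (s t : bterm)
| BSub   (s t : bterm)
| BEq    (s t : bterm).

Definition sat_batom (σ : assignment) (a : batom) : Prop :=
  match a with
  | BEmpty s => eqV (eval σ s) emptyV
  | BDisj s t => eqV (interV (eval σ s) (eval σ t)) emptyV
  | BSub s t => subV (eval σ s) (eval σ t)
  | BEq s t => eqV (eval σ s) (eval σ t)
  end.

Definition batom_ok (prod uprod : bool) (a : batom) : bool :=
  match a with
  | BEmpty s => bterm_ok prod uprod s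
  | BDisj s t | BSub s t | BEq s t => bterm_ok prod uprod s && bterm_ok prod uprod t
  end.

Definition blit := (bool * batom)%type.
Definition sat_blit (σ : assignment) (l : blit) : Prop :=
  if fst l then sat_batom σ (snd l) else ~ sat_batom σ (snd l).

Definition convex {L : Type} (ok : L -> bool) (sat : assignment -> L -> Prop) : Prop :=
  forall (psi : list L) (eqs : list (nat * nat)),
    (forall l, In l psi -> ok l = true) ->
    eqs <> [] ->
    (forall σ : assignment, (forall l, In l psi -> sat σ l) ->
        exists p, In p eqs /\ eqV (σ (fst p)) (σ (snd p))) ->
    exists p, In p eqs /\
      forall σ : assignment, (forall l, In l psi -> sat σ l) -> eqV (σ (fst p)) (σ (snd p)).

Definition mls_convex (E : mls_ext) : Prop :=
  convex (fun l : mlit => atom_ok E (snd l)) sat_mlit.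
Definition bst_convex (prod uprod : bool) : Prop :=
  convex (fun l : blit => batom_ok prod uprod (snd l)) sat_blit.

Definition MLSS  := {| e_single := true;  e_pow := false; e_bigu := false; e_prod := false; e_uprod := false |}.
Definition MLSP  := {| e_single := false; e_pow := true;  e_bigu := false; e_prod := false; e_uprod := false |}.
Definition MLSSP := {| e_single := true;  e_pow := true;  e_bigu := false; e_prod := false; e_uprod := false |}.
Definition MLSU  := {| e_single := false; e_pow := false; e_bigu := true;  e_prod := false; e_uprod := false |}.
Definition MLSx  := {| e_single := false; e_pow := false; e_bigu := false; e_prod := true;  e_uprod := false |}.
Definition MLSo  := {| e_single := false; e_pow := false; e_bigu := false; e_prod := false; e_uprod := true |}.

(* Main.v *)
Require Import Defs.
From Stdlib Require Import List Classical.
Import ListNotations.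

Lemma eqV_refl : forall x, eqV x x.
Proof. induction x as [A f IH]; simpl; split; intros a; exists a; apply IH. Qed.

Definition E (u : V) : Prop := idx u -> False.

Lemma E_l : forall u v, eqV u v -> E v -> E u.
Proof. intros [A f] [B g] [H1 H2] Hv a. destruct (H1 a) as [b _]. exact (Hv b). Qed.
Lemma E_r : forall u v, eqV u v -> E u -> E v.
Proof. intros [A f] [B g] [H1 H2] Hu b. destruct (H2 b) as [a _]. exact (Hu a). Qed.
Lemma E_E : forall u v, E u -> E v -> eqV u v.
Proof. intros [A f] [B g] Hu Hv; simpl; split; intros a; [destruct (Hu a)|destruct (Hv a)]. Qed.
Lemma E_emp : forall u, eqV u emptyV <-> E u.
Proof. intros u; split; intros H. eapply E_l; eauto. intros []. apply E_E; auto. intros []. Qed.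
Lemma E_ne : forall u v, E u -> idx v -> ~ eqV u v.
Proof. intros u v Hu b H. exact (E_r u v H Hu b). Qed.

Lemma One_eq : forall u v, (exists i : idx u, True) -> (exists j : idx v, True) ->
  (forall i, E (elt u i)) -> (forall j, E (elt v j)) -> eqV u v.
Proof.
  intros [A f] [B g] [i _] [j _] Hu Hv; simpl in *; split.
  - intros a; exists j; apply E_E; auto.
  - intros b; exists i; apply E_E; auto.
Qed.

Lemma one_or_empty : forall y x, (forall i, E (elt x i)) -> (exists j : idx x, True) ->
  subV y x -> E y \/ eqV y x.
Proof.
  intros y x Hx Hne Hs.
  destruct (classic (exists i : idx y, True)) as [Hy|Hy].
  - right. apply One_eq; auto. intros i.
    destruct (Hs (elt y i)) as [b Hb]. exists i; apply eqV_refl.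
    eapply E_l; eauto.
  - left. intros i; apply Hy; exists i; auto.
Qed.

Ltac solve_psi := intros l Hl; simpl in Hl;
  repeat (destruct Hl as [<-|Hl]); [..|contradiction]; simpl.

Ltac refute H psi eqs :=
  intro H; specialize (H psi eqs); simpl in H.

Definition asg (a b c : V) : assignment :=
  fun n => match n with 0 => a | 1 => b | 2 => c | _ => emptyV end.

Definition oneV := singV emptyV.
Lemma E_emptyV : E emptyV. Proof. intros []. Qed.
Lemma E_elt_one : forall i, E (elt oneV i). Proof. intros; apply E_emptyV. Qed.

Lemma refute_gen {L} (ok : L -> bool) sat psi (eqs : list (nat*nat)) :
  (forall l, In l psi -> ok l = true) -> eqs <> [] ->
  (forall σ : assignment, (forall l, In l psi -> sat σ l) ->
        exists p, In p eqs /\ eqV (σ (fst p)) (σ (snd p))) ->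
  (forall p, In p eqs -> exists σ, (forall l, In l psi -> sat σ l) /\ ~ eqV (σ (fst p)) (σ (snd p))) ->
  ~ convex ok sat.
Proof.
  intros Hok Hne Hc Hw H. destruct (H psi eqs Hok Hne Hc) as [p [Hp Hall]].
  destruct (Hw p Hp) as [s [Hs Hn]]. exact (Hn (Hall s Hs)).
Qed.

Lemma sub_empty : forall x, subV emptyV x.
Proof. intros x z [[] _]. Qed.
Lemma sub_refl : forall x, subV x x.
Proof. intros x z H; exact H. Qed.

Lemma single_part (E0 : mls_ext) (a : atom) (xv : V) :
  atom_ok E0 a = true ->
  (forall σ, sat_atom σ a -> eqV (σ 0) emptyV -> (forall i, E (elt (σ 1) i)) /\ exists j : idx (σ 1), True) ->
  sat_atom (asg emptyV xv emptyV) a -> sat_atom (asg emptyV xv xv) a ->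
  idx xv -> (forall i, E (elt xv i)) ->
  ~ mls_convex E0.
Proof.
  intros Hok Ha Hs1 Hs2 Hx HxE.
  apply (refute_gen _ _ [(true, AEmpty 0); (true, a); (true, ASub 2 1)] [(2,0);(2,1)]).
  - intros l Hl; simpl in Hl; repeat (destruct Hl as [<-|Hl]); auto; contradiction.
  - discriminate.
  - intros σ Hσ.
    assert (H0 : eqV (σ 0) emptyV) by (apply (Hσ (true, AEmpty 0)); simpl; auto).
    assert (H1 : sat_atom σ a) by (apply (Hσ (true, a)); simpl; auto).
    assert (H2 : subV (σ 2) (σ 1)) by (apply (Hσ (true, ASub 2 1)); simpl; auto).
    destruct (Ha σ H1 H0) as [HE Hn].
    destruct (one_or_empty _ _ HE Hn H2) as [Hy|Hy].
    + exists (2,0); split; simpl; auto. apply E_E; auto. apply E_emp; auto.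
    + exists (2,1); split; simpl; auto.
  - intros p Hp; simpl in Hp; repeat (destruct Hp as [<-|Hp]); [..|contradiction].
    + exists (asg emptyV xv xv); split.
      * intros l Hl; simpl in Hl; repeat (destruct Hl as [<-|Hl]); [..|contradiction]; cbn [sat_mlit asg fst snd sat_atom]; auto.
        apply eqV_refl. apply sub_refl.
      * cbn [asg fst snd]. intro H. apply E_emp in H. exact (H Hx).
    + exists (asg emptyV xv emptyV); split.
      * intros l Hl; simpl in Hl; repeat (destruct Hl as [<-|Hl]); [..|contradiction]; cbn [sat_mlit asg fst snd sat_atom]; auto.
        apply eqV_refl. apply sub_empty.
      * cbn [asg fst snd]. apply E_ne; auto. apply E_emptyV.
Qed.

Ltac killE := unfold E; simpl; let x := fresh in let q := fresh in
  intros [x q]; destruct x; simpl in *; try destruct q; try contradiction.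

Lemma nE_ex : forall u, ~ E u -> exists i : idx u, True.
Proof. intros u H. apply NNPP. intro H'. apply H. intro i. apply H'. exists i; auto. Qed.

Lemma MLSS_nc : forall E0, e_single E0 = true -> ~ mls_convex E0.
Proof.
  intros E0 HE. apply (single_part E0 (ASingle 1 0) oneV); auto.
  - intros σ H H0. cbn [sat_atom] in H. apply E_emp in H0.
    destruct (σ 1) as [B g]. simpl in H. destruct H as [H1 H2]. split.
    + intros b. destruct (H1 b) as [_ Hb]. eapply E_l; eauto.
    + destruct (H2 tt) as [b _]. exists b; auto.
  - apply eqV_refl.
  - apply eqV_refl.
  - exact tt.
  - apply E_elt_one.
Qed.

Lemma MLSP_nc : ~ mls_convex MLSP.
Proof.
  apply (single_part MLSP (APow 1 0) (powV emptyV)); auto.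
  - intros σ H H0. cbn [sat_atom] in H. apply E_emp in H0.
    destruct (σ 1) as [B g]. unfold powV in H. simpl in H. destruct H as [H1 H2]. split.
    + intros b. destruct (H1 b) as [P Hb]. eapply E_l; eauto. intros [a _]. exact (H0 a).
    + destruct (H2 (fun _ => True)) as [b _]. exists b; auto.
  - apply eqV_refl.
  - apply eqV_refl.
  - exact (fun _ => True).
  - intros P [[] _].
Qed.

Lemma MLSU_nc : ~ mls_convex MLSU.
Proof.
  apply (refute_gen _ _ [(true, AEmpty 0); (true, ABigU 0 1); (false, AEmpty 1); (true, ABigU 0 2)] [(2,0);(2,1)]).
  - intros l Hl; simpl in Hl; repeat (destruct Hl as [<-|Hl]); auto; contradiction.
  - discriminate.
  - intros σ Hσ.
    assert (H0 : eqV (σ 0) emptyV) by (apply (Hσ (true, AEmpty 0)); simpl; auto).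
    assert (H1 : eqV (σ 0) (bigunionV (σ 1))) by (apply (Hσ (true, ABigU 0 1)); simpl; auto).
    assert (H2 : ~ eqV (σ 1) emptyV) by (apply (Hσ (false, AEmpty 1)); simpl; auto).
    assert (H3 : eqV (σ 0) (bigunionV (σ 2))) by (apply (Hσ (true, ABigU 0 2)); simpl; auto).
    apply E_emp in H0.
    pose proof (E_r _ _ H1 H0) as B1. pose proof (E_r _ _ H3 H0) as B2.
    assert (N1 : ~ E (σ 1)) by (intro X; apply H2; apply E_emp; exact X).
    destruct (classic (E (σ 2))) as [X|X].
    + exists (2,0); split; simpl; auto. apply E_E; auto.
    + exists (2,1); split; simpl; auto. apply One_eq; try apply nE_ex; auto.
      * intros i j. exact (B2 (existT _ i j)).
      * intros i j. exact (B1 (existT _ i j)).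
  - intros p Hp; simpl in Hp; repeat (destruct Hp as [<-|Hp]); [..|contradiction].
    + exists (asg emptyV oneV oneV); split.
      * intros l Hl; simpl in Hl; repeat (destruct Hl as [<-|Hl]); [..|contradiction]; cbn [sat_mlit asg fst snd sat_atom].
        apply eqV_refl. apply E_E. apply E_emptyV. killE.
        intro H; apply E_emp in H; exact (H tt). apply E_E. apply E_emptyV. killE.
      * cbn [asg fst snd]. intro H. apply E_emp in H. exact (H tt).
    + exists (asg emptyV oneV emptyV); split.
      * intros l Hl; simpl in Hl; repeat (destruct Hl as [<-|Hl]); [..|contradiction]; cbn [sat_mlit asg fst snd sat_atom].
        apply eqV_refl. apply E_E. apply E_emptyV. killE.
        intro H; apply E_emp in H; exact (H tt). apply E_E. apply E_emptyV. killE.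
      * cbn [asg fst snd]. apply E_ne. apply E_emptyV. exact tt.
Qed.

Lemma prod_gen {L} (ok : L -> bool) sat psi :
  (forall l, In l psi -> ok l = true) ->
  (forall σ, (forall l, In l psi -> sat σ l) -> E (σ 0) /\ (E (σ 1) \/ E (σ 2))) ->
  (forall l, In l psi -> sat (asg emptyV emptyV oneV) l) ->
  (forall l, In l psi -> sat (asg emptyV oneV emptyV) l) -> ~ convex ok sat.
Proof.
  intros Hok Hc W1 W2. apply (refute_gen ok sat psi [(1,0);(2,0)]); auto.
  - discriminate.
  - intros σ Hσ. destruct (Hc σ Hσ) as [H0 [H|H]].
    + exists (1,0); split; simpl; auto. apply E_E; auto.
    + exists (2,0); split; simpl; auto. apply E_E; auto.
  - intros p Hp; simpl in Hp; repeat (destruct Hp as [<-|Hp]); [..|contradiction].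
    + exists (asg emptyV oneV emptyV); split; auto. cbn [asg fst snd].
      intro H. apply E_emp in H. exact (H tt).
    + exists (asg emptyV emptyV oneV); split; auto. cbn [asg fst snd].
      intro H. apply E_emp in H. exact (H tt).
Qed.

Lemma prodE : forall y z, E (prodV y z) -> E y \/ E z.
Proof.
  intros y z H. destruct (classic (E y)) as [X|X]; auto.
  destruct (classic (E z)) as [Y|Y]; auto.
  destruct (nE_ex _ X) as [i _]. destruct (nE_ex _ Y) as [j _]. destruct (H (i, j)).
Qed.
Lemma uprodE : forall y z, E (uprodV y z) -> E y \/ E z.
Proof.
  intros y z H. destruct (classic (E y)) as [X|X]; auto.
  destruct (classic (E z)) as [Y|Y]; auto.
  destruct (nE_ex _ X) as [i _]. destruct (nE_ex _ Y) as [j _]. destruct (H (i, j)).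
Qed.

Theorem lemma14 :
  ~ mls_convex MLSS /\ ~ mls_convex MLSP /\ ~ mls_convex MLSSP /\
  ~ mls_convex MLSU /\ ~ mls_convex MLSx /\ ~ mls_convex MLSo /\
  ~ bst_convex true false /\ ~ bst_convex false true.
Proof.
  split; [apply MLSS_nc; reflexivity|].
  split; [apply MLSP_nc|].
  split; [apply MLSS_nc; reflexivity|].
  split; [apply MLSU_nc|].
  split.
  { apply (prod_gen _ _ [(true, AEmpty 0); (true, AProd 0 1 2)]).
    - intros l Hl; simpl in Hl; repeat (destruct Hl as [<-|Hl]); auto; contradiction.
    - intros σ Hσ.
      assert (H0 : eqV (σ 0) emptyV) by (apply (Hσ (true, AEmpty 0)); simpl; auto).
      assert (H1 : eqV (σ 0) (prodV (σ 1) (σ 2))) by (apply (Hσ (true, AProd 0 1 2)); simpl; auto).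
      apply E_emp in H0. split; auto. apply prodE. eapply E_r; eauto.
    - intros l Hl; simpl in Hl; repeat (destruct Hl as [<-|Hl]); [..|contradiction]; cbn [sat_mlit asg fst snd sat_atom].
      apply eqV_refl. apply E_E. apply E_emptyV. killE.
    - intros l Hl; simpl in Hl; repeat (destruct Hl as [<-|Hl]); [..|contradiction]; cbn [sat_mlit asg fst snd sat_atom].
      apply eqV_refl. apply E_E. apply E_emptyV. killE. }
  split.
  { apply (prod_gen _ _ [(true, AEmpty 0); (true, AUProd 0 1 2)]).
    - intros l Hl; simpl in Hl; repeat (destruct Hl as [<-|Hl]); auto; contradiction.
    - intros σ Hσ.
      assert (H0 : eqV (σ 0) emptyV) by (apply (Hσ (true, AEmpty 0)); simpl; auto).
      assert (H1 : eqV (σ 0) (uprodV (σ 1) (σ 2))) by (apply (Hσ (true, AUProd 0 1 2)); simpl; auto).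
      apply E_emp in H0. split; auto. apply uprodE. eapply E_r; eauto.
    - intros l Hl; simpl in Hl; repeat (destruct Hl as [<-|Hl]); [..|contradiction]; cbn [sat_mlit asg fst snd sat_atom].
      apply eqV_refl. apply E_E. apply E_emptyV. killE.
    - intros l Hl; simpl in Hl; repeat (destruct Hl as [<-|Hl]); [..|contradiction]; cbn [sat_mlit asg fst snd sat_atom].
      apply eqV_refl. apply E_E. apply E_emptyV. killE. }
  split.
  { apply (prod_gen _ _ [(true, BEmpty (TVar 0)); (true, BEmpty (TProd (TVar 1) (TVar 2)))]).
    - intros l Hl; simpl in Hl; repeat (destruct Hl as [<-|Hl]); auto; contradiction.
    - intros σ Hσ.
      assert (H0 : eqV (σ 0) emptyV) by (apply (Hσ (true, BEmpty (TVar 0))); simpl; auto).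
      assert (H1 : eqV (prodV (σ 1) (σ 2)) emptyV) by (apply (Hσ (true, BEmpty (TProd (TVar 1) (TVar 2)))); simpl; auto).
      apply E_emp in H0. apply E_emp in H1. split; auto. apply prodE; auto.
    - intros l Hl; simpl in Hl; repeat (destruct Hl as [<-|Hl]); [..|contradiction]; cbn [sat_blit asg fst snd sat_batom eval].
      apply eqV_refl. apply E_emp. killE.
    - intros l Hl; simpl in Hl; repeat (destruct Hl as [<-|Hl]); [..|contradiction]; cbn [sat_blit asg fst snd sat_batom eval].
      apply eqV_refl. apply E_emp. killE. }
  { apply (prod_gen _ _ [(true, BEmpty (TVar 0)); (true, BEmpty (TUProd (TVar 1) (TVar 2)))]).
    - intros l Hl; simpl in Hl; repeat (destruct Hl as [<-|Hl]); auto; contradiction.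
    - intros σ Hσ.
      assert (H0 : eqV (σ 0) emptyV) by (apply (Hσ (true, BEmpty (TVar 0))); simpl; auto).
      assert (H1 : eqV (uprodV (σ 1) (σ 2)) emptyV) by (apply (Hσ (true, BEmpty (TUProd (TVar 1) (TVar 2)))); simpl; auto).
      apply E_emp in H0. apply E_emp in H1. split; auto. apply uprodE; auto.
    - intros l Hl; simpl in Hl; repeat (destruct Hl as [<-|Hl]); [..|contradiction]; cbn [sat_blit asg fst snd sat_batom eval].
      apply eqV_refl. apply E_emp. killE.
    - intros l Hl; simpl in Hl; repeat (destruct Hl as [<-|Hl]); [..|contradiction]; cbn [sat_blit asg fst snd sat_batom eval].
      apply eqV_refl. apply E_emp. killE. }
Qed.
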